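(* Let $n \ge 1$, let $C \in \mathbb{R}^{n\times n}$ be a real cost matrix, let $\eta > 0$, and set $K = \exp[-\eta C]$, i.e. $K_{ij} = e^{-\eta C_{ij}}$. Then: (i) the entropic Minimum Mean Cycle problem $$\min_{P \in \Delta_{n\times n} \,:\, P\mathbf{1} = P^T\mathbf{1}} \ \langle P, C\rangle + \frac{1}{\eta}\sum_{i,j} P_{ij}\log P_{ij}$$ has a unique minimizer $P^\star$; (ii) there exists a positive diagonal matrix $X$ such that $B = XKX^{-1}$ satisfies $B\mathbf{1} = B^T\mathbf{1}$, and for any such $X$ we have $P^\star = B / (\mathbf{1}^T B \mathbf{1})$.
   Context: $\Delta_{n\times n} = \{P \in \mathbb{R}^{n\times n}_{\ge 0} : \sum_{ij} P_{ij} = 1\}$; $\mathbf{1}$ is the all-ones vector; $\langle P, C\rangle = \sum_{ij} P_{ij}C_{ij}$; $0\log 0 = 0$. The Matrix Balancing problem for a positive matrix $K$ asks for a positive diagonal $X$ such that $P = XKX^{-1}$ has equal row and column sums, $P\mathbf{1} = P^T\mathbf{1}$. *)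

(* Defs.v *)
From mathcomp Require Import all_boot all_order all_algebra.
From mathcomp Require Import all_classical all_reals all_analysis.
Set Implicit Arguments. Unset Strict Implicit. Unset Printing Implicit Defensive.
Import Order.TTheory GRing.Theory Num.Theory.
Local Open Scope ring_scope.

Section Defs.
Variable R : realType.

Definition in_simplex n (P : 'M[R]_n) : Prop :=
  (forall i j, 0 <= P i j) /\ \sum_i \sum_j P i j = 1.

Definition balanced n (P : 'M[R]_n) : Prop :=
  P *m (const_mx 1 : 'cV[R]_n) = P^T *m (const_mx 1 : 'cV[R]_n).

Definition xlogx (x : R) : R := if x == 0 then 0 else x * ln x.

Definition entropic_obj n (eta : R) (C P : 'M[R]_n) : R :=
  \sum_i \sum_j P i j * C i j + eta^-1 * \sum_i \sum_j xlogx (P i j).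

Definition gibbs_kernel n (eta : R) (C : 'M[R]_n) : 'M[R]_n :=
  \matrix_(i, j) expR (- eta * C i j).

Definition pos_diag n (X : 'M[R]_n) : Prop :=
  is_diag_mx X /\ forall i, 0 < X i i.

Definition total_sum n (B : 'M[R]_n) : R := \sum_i \sum_j B i j.
End Defs.

(* Main.v *)
Require Import Defs.
From mathcomp Require Import all_boot all_order all_algebra.
Set Implicit Arguments. Unset Strict Implicit.
From mathcomp Require Import all_classical all_reals all_analysis.
From mathcomp Require Import ring lra.
Import Order.TTheory GRing.Theory Num.Theory.
Import numFieldNormedType.Exports.
Local Open Scope ring_scope.
Local Open Scope classical_set_scope.
Lemma cont_sum (R : realType) (T : topologicalType) (I : Type) (r : seq I)
  (F : I -> T -> R) :
  (forall i, continuous (F i)) -> continuous (fun x => \sum_(i <- r) F i x).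
Proof.
move=> hF; elim: r => [|a r IH].
  under eq_fun do rewrite big_nil; exact: cst_continuous.
under eq_fun do rewrite big_cons.
move=> x; apply: continuousD; [exact: hF | exact: IH].
Qed.

Lemma fcont (R : realType) n (K : 'M[R]_n) :
  continuous (fun x : 'rV[R]_n => \sum_i \sum_j K i j * expR (x ord0 i - x ord0 j)).
Proof.
apply: cont_sum => i; apply: cont_sum => j x.
apply: (@continuousM R _ (cst (K i j)) (fun x : 'rV[R]_n => expR (x ord0 i - x ord0 j)) x).
  exact: cst_continuous.
apply: (@continuous_comp _ _ _ (fun x : 'rV[R]_n => x ord0 i - x ord0 j) expR).
  by apply: continuousB; exact: coord_continuous.
exact: continuous_expR.
Qed.

Lemma le_sum1 (R : realType) (I : finType) (F : I -> R) i :
  (forall j, 0 <= F j) -> F i <= \sum_j F j.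
Proof. by move=> h; rewrite (bigD1 i) //= lerDl sumr_ge0. Qed.

Lemma le_sum2 (R : realType) (I : finType) (F : I -> I -> R) i j :
  (forall i j, 0 <= F i j) -> F i j <= \sum_i \sum_j F i j.
Proof.
move=> h.
have h1 : F i j <= \sum_j F i j by apply: le_sum1 => k; exact: h.
have h2 : \sum_j F i j <= \sum_i \sum_j F i j.
  by apply: (@le_sum1 _ _ (fun k => \sum_j F k j)) => k; apply: sumr_ge0 => l _.
exact: le_trans h1 h2.
Qed.

Lemma x2 (R : realType) (A B u : R) : 0 < A -> 0 <= B -> 0 < u -> u * (A + B) = 1 ->
 A + B <= (A + B) / 2 + 2 * A * B * u -> A = B.
Proof. move=> hA hB hu uT hh.
have T0 : 0 < A + B by lra.
have h2 : (A+B)*(A+B) <= ((A+B)/2 + 2*A*B*u)*(A+B) by rewrite ler_pM2r.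
have e : ((A+B)/2 + 2*A*B*u)*(A+B) = (A+B)*(A+B)/2 + 2*A*B*(u*(A+B)) by ring.
rewrite e uT in h2.
have h3 : (A - B)^+2 <= 0 by nra.
have h4 : (A - B)^+2 = 0 by apply/eqP; rewrite eq_le h3 sqr_ge0.
by apply/eqP; rewrite -subr_eq0 -sqrf_eq0 h4.
Qed.

Lemma AB_eq (R : realType) (A B : R) : 0 <= A -> 0 <= B ->
  (forall s, 0 < s -> A + B <= s * A + s^-1 * B) -> A = B.
Proof.
move=> hA hB h.
have [A0|Apos] := eqVneq A 0.
  have := h 2 (ltr0Sn _ 1); rewrite A0 mulr0 !add0r => hh.
  have : B <= 0 by lra.
  by move=> hb; apply/eqP; rewrite eq_le hb hB.
have Ap : 0 < A by rewrite lt_def Apos hA.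
have T0 : 0 < A + B by lra.
have s0 : 0 < (A + B) / (2 * A) by apply: divr_gt0 => //; lra.
have := h _ s0.
have -> : (A + B) / (2 * A) * A = (A + B) / 2 by field; lra.
have -> : ((A + B) / (2 * A))^-1 * B = 2 * A * B * (A + B)^-1.
  by field; lra.
set u := (A + B)^-1.
have uT : u * (A + B) = 1 by rewrite mulVf //; lra.
have u0 : 0 < u by rewrite invr_gt0.
move=> hh; exact: (@x2 _ A B u Ap hB u0 uT hh).
Qed.
Lemma decomp (R : realType) n (w : 'I_n -> 'I_n -> R) k (s : R) : s != 0 ->
 \sum_i \sum_j w i j * ((if i == k then s else 1) * (if j == k then s^-1 else 1))
 = w k k + s * (\sum_(j | j != k) w k j) + s^-1 * (\sum_(i | i != k) w i k)
   + \sum_(i | i != k) \sum_(j | j != k) w i j.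
Proof.
move=> s0.
rewrite (bigD1 k) //= (bigD1 k) //= eqxx mulfV // mulr1.
have -> : \sum_(j | j != k) w k j * (s * (if j == k then s^-1 else 1))
    = s * \sum_(j | j != k) w k j.
  rewrite mulr_sumr; apply: eq_bigr => j /negPf ->; by rewrite mulr1 mulrC.
have -> : \sum_(i | i != k) \sum_j w i j * ((if i == k then s else 1) *
                                           (if j == k then s^-1 else 1))
    = \sum_(i | i != k) (s^-1 * w i k + \sum_(j | j != k) w i j).
  apply: eq_bigr => i /negPf ->; rewrite (bigD1 k) //= eqxx mul1r mulrC.
  congr (_ + _); apply: eq_bigr => j /negPf ->; by rewrite mul1r mulr1.
by rewrite big_split /= -mulr_sumr !addrA.
Qed.
Lemma bal_exists (R : realType) n (hn : (0 < n)%N) (K : 'M[R]_n)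
  (hK : forall i j, 0 < K i j) :
  exists x : 'rV[R]_n, forall k,
    \sum_j K k j * expR (x ord0 k - x ord0 j) =
    \sum_i K i k * expR (x ord0 i - x ord0 k).
Proof.
pose f := fun x : 'rV[R]_n => \sum_i \sum_j K i j * expR (x ord0 i - x ord0 j).
pose f0 := \sum_i \sum_j K i j.
pose c := \sum_i \sum_j (K i j)^-1.
pose M := f0 * c.
have f0ge : 0 <= f0 by apply: sumr_ge0 => i _; apply: sumr_ge0 => j _; exact: ltW.
have Kc : forall i j, 1 <= K i j * c.
  move=> i j; have : (K i j)^-1 <= c.
    by apply: (@le_sum2 _ _ (fun i j => (K i j)^-1)) => a b; rewrite invr_ge0 ltW.
  move=> h; apply: le_trans (ler_wpM2l (ltW (hK i j)) h).
  by rewrite mulfV // gt_eqF.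
have c0 : 0 <= c.
  by apply: sumr_ge0 => i _; apply: sumr_ge0 => j _; rewrite invr_ge0 ltW.
have M0 : 0 <= M by apply: mulr_ge0.
pose A := [set v : 'rV[R]_n | forall i, `[- M, M] (v ord0 i)].
have cA : compact A.
  by apply: (@rV_compact _ _ (fun=> `[- M, M])) => _; exact: segment_compact.
have A0' : A 0.
  move=> i /=; rewrite mxE in_itv /=; apply/andP; split => //.
  by rewrite lerNl oppr0.
have A0 : A !=set0 by exists 0.
have cf : {within A, continuous f} by apply: continuous_subspaceT; exact: fcont.
have [xs xsA xsmin] := EVT_min_rV A0 cA cf.
have fxs0 : f xs <= f0.
  have -> : f0 = f 0.
    rewrite /f /f0; apply: eq_bigr => i _; apply: eq_bigr => j _.
    by rewrite !mxE subrr expR0 mulr1.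
  by apply: xsmin; rewrite inE.
have big : forall y : 'rV[R]_n, forall a b, M < y ord0 a - y ord0 b -> f xs <= f y.
  move=> y a b h.
  apply: le_trans fxs0 _.
  have h1 : f0 <= K a b * M.
    have e : K a b * M = f0 * (K a b * c) by rewrite /M; ring.
    by rewrite e -[X in X <= _]mulr1; apply: ler_wpM2l => //; exact: Kc.
  have h2 : M <= expR (y ord0 a - y ord0 b).
    apply: le_trans (expR_ge1Dx _); lra.
  apply: le_trans h1 _; apply: le_trans (ler_wpM2l (ltW (hK a b)) h2) _.
  apply: (@le_sum2 _ _ (fun i j => K i j * expR (y ord0 i - y ord0 j))) => i j.
  by rewrite mulr_ge0 // ?expR_ge0 // ltW.
have glob : forall y, f xs <= f y.
  move=> y; pose i0 := Ordinal hn.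
  pose y' := \row_i (y ord0 i - y ord0 i0).
  have fy' : f y' = f y.
    apply: eq_bigr => i _; apply: eq_bigr => j _; rewrite !mxE.
    congr (_ * expR _); ring.
  case: (boolP [forall i, y' ord0 i \in `[- M, M]%R]).
    move/forallP => h; rewrite -fy'; apply: xsmin; rewrite inE => i; have := h i; rewrite /= !in_itv /= => hh; exact: hh.
  move/forallPn => [i]; rewrite mxE in_itv /= negb_and -!ltNge; case/orP => h.
    by apply: (big _ i0 i); lra.
  by apply: (big _ i i0); lra.
exists xs => k.
pose w := fun i j => K i j * expR (xs ord0 i - xs ord0 j).
have w0 : forall i j, 0 <= w i j by move=> i j; rewrite mulr_ge0 ?expR_ge0 // ltW.
have key : forall s, 0 < s ->
    f (\row_i (xs ord0 i + (if i == k then ln s else 0))) =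
    \sum_i \sum_j w i j * ((if i == k then s else 1) * (if j == k then s^-1 else 1)).
  move=> s s0; apply: eq_bigr => i _; apply: eq_bigr => j _; rewrite !mxE /w -mulrA.
  congr (_ * _).
  have -> : xs ord0 i + (if i == k then ln s else 0) -
            (xs ord0 j + (if j == k then ln s else 0)) =
            (xs ord0 i - xs ord0 j) + (if i == k then ln s else 0) +
            - (if j == k then ln s else 0) by ring.
  rewrite !expRD expRN -mulrA; congr (_ * (_ * _)).
    by case: (i == k) => /=; rewrite ?expR0 // lnK // posrE.
  by case: (j == k) => /=; rewrite ?oppr0 ?expR0 ?invr1 // expRN lnK // posrE.
have fxs : f xs = \sum_i \sum_j w i j * ((if i == k then 1 else 1) * (if j == k then 1^-1 else 1)).
  apply: eq_bigr => i _; apply: eq_bigr => j _. by rewrite invr1 !if_same !mulr1.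
have hAB : forall s, 0 < s ->
   \sum_(j | j != k) w k j + \sum_(i | i != k) w i k <=
   s * (\sum_(j | j != k) w k j) + s^-1 * (\sum_(i | i != k) w i k).
  move=> s s0; have := glob _ : f xs <= f (\row_i (xs ord0 i + (if i == k then ln s else 0))).
  rewrite key // fxs !decomp ?oner_neq0 ?gt_eqF // invr1 !mul1r.
  move=> hh; lra.
have := AB_eq (sumr_ge0 _ (fun j _ => w0 k j)) (sumr_ge0 _ (fun i _ => w0 i k)) hAB.
move=> e; rewrite (bigD1 k) //= [RHS](bigD1 k) //=.
by congr (_ + _).
Qed.
Definition gg (R : realType) (q p : R) := xlogx q - q * ln p - q + p.

Lemma gg_gt0 (R : realType) (q p : R) : 0 <= q -> 0 < p -> q != p -> 0 < gg q p.
Proof.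
move=> q0 p0 qp; rewrite /gg /xlogx.
have [->|qn0] := eqVneq q 0; first by rewrite !mul0r !subr0 add0r.
have qpos : 0 < q by rewrite lt_def qn0 q0.
have yn0 : ln p - ln q != 0.
  rewrite subr_eq0; apply/negP => /eqP h.
  by move: qp; rewrite (ln_inj _ _ h) ?eqxx // posrE.
have := expR_gt1Dx yn0; rewrite expRB !lnK ?posrE // => h.
have h2 : q * (1 + (ln p - ln q)) < q * (p / q) by rewrite ltr_pM2l.
have e : q * (p / q) = p by rewrite mulrCA mulfV ?mulr1.
rewrite e in h2; lra.
Qed.

Lemma gg_ge0 (R : realType) (q p : R) : 0 <= q -> 0 < p -> 0 <= gg q p.
Proof.
move=> q0 p0; have [->|qp] := eqVneq q p; last exact/ltW/gg_gt0.
by rewrite /gg /xlogx gt_eqF // subrr add0r addrC subrr.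
Qed.

Lemma gg_eq (R : realType) (q p : R) : 0 < p -> gg p p = 0.
Proof. by move=> p0; rewrite /gg /xlogx gt_eqF // subrr add0r addrC subrr. Qed.

Lemma balancedP (R : realType) n (M : 'M[R]_n) :
  balanced M <-> forall i, \sum_j M i j = \sum_j M j i.
Proof.
split.
  rewrite /balanced => h i; have := congr1 (fun A : 'cV[R]_n => A i ord0) h; rewrite !mxE.
  by under eq_bigr do rewrite mxE mulr1; under [RHS]eq_bigr do rewrite !mxE mulr1.
move=> h; rewrite /balanced; apply/matrixP => i k; rewrite !mxE.
under eq_bigr do rewrite mxE mulr1; under [RHS]eq_bigr do rewrite !mxE mulr1.
exact: h.
Qed.
Lemma sum2_ge0 (R : realType) n (F : 'I_n -> 'I_n -> R) :
  (forall i j, 0 <= F i j) -> 0 <= \sum_i \sum_j F i j.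
Proof. by move=> h; apply: sumr_ge0 => i _; apply: sumr_ge0 => j _. Qed.

Lemma gibbs_key (R : realType) n (hn : (0 < n)%N) (C : 'M[R]_n) (eta : R)
  (heta : 0 < eta) (d : 'I_n -> R) (hd : forall i, 0 < d i)
  (hb : balanced (\matrix_(i, j) (d i * gibbs_kernel eta C i j / d j))) :
  let B := \matrix_(i, j) (d i * gibbs_kernel eta C i j / d j) in
  let P := (total_sum B)^-1 *: B in
  [/\ forall i j, 0 < P i j, in_simplex P, balanced P &
  forall Q, in_simplex Q -> balanced Q ->
   entropic_obj eta C Q = - eta^-1 * ln (total_sum B) +
     eta^-1 * \sum_i \sum_j gg (Q i j) (P i j)].
Proof.
move=> B P.
have Kpos : forall i j, 0 < gibbs_kernel eta C i j by move=> i j; rewrite mxE expR_gt0.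
have Bpos : forall i j, 0 < B i j.
  by move=> i j; rewrite mxE divr_gt0 // mulr_gt0.
pose i0 := Ordinal hn.
have Z0 : 0 < total_sum B.
  apply: lt_le_trans (Bpos i0 i0) _.
  by apply: (@le_sum2 _ _ B) => i j; exact: ltW.
have Ppos : forall i j, 0 < P i j by move=> i j; rewrite mxE mulr_gt0 // invr_gt0.
have Psum : \sum_i \sum_j P i j = 1.
  have -> : \sum_i \sum_j P i j = (total_sum B)^-1 * total_sum B.
    rewrite /total_sum mulr_sumr; apply: eq_bigr => i _; rewrite mulr_sumr.
    by apply: eq_bigr => j _; rewrite mxE.
  by rewrite mulVf ?gt_eqF.
have Pbal : balanced P.
  apply/balancedP => i; under eq_bigr do rewrite mxE; under [RHS]eq_bigr do rewrite mxE.
  by rewrite -!mulr_sumr; congr (_ * _); move/balancedP: hb; apply.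
split => // [|Q [Q0 Q1] Qb].
  by split => // i j; exact: ltW.
have lnP : forall i j, ln (P i j) =
   - ln (total_sum B) + ln (d i) + (- eta * C i j) - ln (d j).
  move=> i j; rewrite !mxE lnM ?posrE ?invr_gt0 ?divr_gt0 ?mulr_gt0 ?expR_gt0 //.
  rewrite lnV ?posrE // ln_div ?posrE ?mulr_gt0 ?expR_gt0 //.
  rewrite lnM ?posrE ?expR_gt0 // expRK; ring.
have gsum : \sum_i \sum_j gg (Q i j) (P i j) =
  \sum_i \sum_j (xlogx (Q i j) + eta * (Q i j * C i j) + ln (total_sum B) * Q i j
     - Q i j * ln (d i) + Q i j * ln (d j) - Q i j + P i j).
  apply: eq_bigr => i _; apply: eq_bigr => j _; rewrite /gg lnP; ring.
have bal : \sum_i \sum_j Q i j * ln (d i) = \sum_i \sum_j Q i j * ln (d j).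
  rewrite [RHS]exchange_big /=.
  under eq_bigr do rewrite -mulr_suml.
  under [RHS]eq_bigr do rewrite -mulr_suml.
  apply: eq_bigr => i _; congr (_ * _); symmetry; move/balancedP: Qb; exact.
rewrite gsum /entropic_obj.
move: bal Psum Q1; rewrite !pair_bigA /= => bal Psum Q1.
rewrite !big_split /= !sumrN -!mulr_sumr bal Psum Q1.
field; lra.
Qed.
Lemma diag_conj (R : realType) n (X K : 'M[R]_n) : pos_diag X ->
  X *m K *m invmx X = \matrix_(i, j) (X i i * K i j / X j j).
Proof.
move=> [hdg hpos].
have eX : X = diag_mx (\row_i X i i).
  apply/matrixP => i j; rewrite !mxE; have [->|ne] := eqVneq i j.
    by rewrite mulr1n.
  rewrite mulr0n; move/is_diag_mxP: hdg => h; exact: h.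
have hY : X *m diag_mx (\row_i (X i i)^-1) = 1%:M.
  rewrite {1}eX mulmx_diag -diag_const_mx; congr diag_mx.
  by apply/matrixP => i j; rewrite !mxE mulfV // gt_eqF.
have [uX _] := mulmx1_unit hY.
have eI : invmx X = diag_mx (\row_i (X i i)^-1).
  by rewrite -[LHS]mulmx1 -hY mulmxA mulVmx // mul1mx.
rewrite eI mul_mx_diag; rewrite [X in X *m K]eX mul_diag_mx.
by apply/matrixP => i j; rewrite !mxE.
Qed.

Lemma sum_gg_zero (R : realType) n (Q P : 'M[R]_n) :
  (forall i j, 0 <= Q i j) -> (forall i j, 0 < P i j) ->
  \sum_i \sum_j gg (Q i j) (P i j) <= 0 -> Q = P.
Proof.
move=> hQ hP; rewrite pair_bigA /= => h.
have h0 : \sum_(p : 'I_n * 'I_n) gg (Q p.1 p.2) (P p.1 p.2) = 0.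
  apply/eqP; rewrite eq_le h sumr_ge0 // => p _; exact: gg_ge0.
have := psumr_eq0P (fun p _ => gg_ge0 (hQ p.1 p.2) (hP p.1 p.2)) h0.
move=> hz; apply/matrixP => i j; apply/eqP; apply/negPn/negP => ne.
by have := gg_gt0 (hQ i j) (hP i j) ne; rewrite (hz (i, j)) // ltxx.
Qed.

Unset Implicit Arguments.
Local Close Scope classical_set_scope.

Theorem lemma2 (R : realType) (n : nat) (hn : (0 < n)%N) (C : 'M[R]_n)
  (eta : R) (heta : 0 < eta) :
  exists Pstar : 'M[R]_n,
    (* (i) Pstar is the unique minimizer of the entropic MMC problem *)
    (in_simplex Pstar /\ balanced Pstar /\
     (forall Q : 'M[R]_n, in_simplex Q -> balanced Q ->
        entropic_obj eta C Pstar <= entropic_obj eta C Q) /\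
     (forall Q : 'M[R]_n, in_simplex Q -> balanced Q ->
        (forall Q' : 'M[R]_n, in_simplex Q' -> balanced Q' ->
           entropic_obj eta C Q <= entropic_obj eta C Q') -> Q = Pstar)) /\
    (* (ii) matrix balancing of K = exp[-eta C] exists and recovers Pstar *)
    (exists X : 'M[R]_n, pos_diag X /\
       balanced (X *m gibbs_kernel eta C *m invmx X)) /\
    (forall X : 'M[R]_n, pos_diag X ->
       balanced (X *m gibbs_kernel eta C *m invmx X) ->
       Pstar = (total_sum (X *m gibbs_kernel eta C *m invmx X))^-1 *:
                 (X *m gibbs_kernel eta C *m invmx X)).
Proof.
set K := gibbs_kernel eta C.
have Kpos : forall i j, 0 < K i j by move=> i j; rewrite mxE expR_gt0.
have [x hx] := bal_exists hn Kpos.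
pose d := fun i => expR (x ord0 i).
have dpos : forall i, 0 < d i by move=> i; exact: expR_gt0.
have hb : balanced (\matrix_(i, j) (d i * K i j / d j)).
  apply/balancedP => k; under eq_bigr do rewrite mxE; under [RHS]eq_bigr do rewrite mxE.
  have t : forall i j, d i * K i j / d j = K i j * expR (x ord0 i - x ord0 j).
    by move=> i j; rewrite /d expRB; ring.
  under eq_bigr do rewrite t; under [RHS]eq_bigr do rewrite t.
  exact: hx.
have [Ppos [P0 P1] Pbal Pobj] := gibbs_key hn heta dpos hb.
set P := (total_sum _)^-1 *: _ in Ppos P0 P1 Pbal Pobj.
have objP : entropic_obj eta C P = - eta^-1 * ln (total_sum (\matrix_(i, j) (d i * K i j / d j))).
  rewrite Pobj //.
  have -> : \sum_i \sum_j gg (P i j) (P i j) = 0.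
    by rewrite big1 // => i _; rewrite big1 // => j _; exact: gg_eq.
  by rewrite mulr0 addr0.
have minP : forall Q, in_simplex Q -> balanced Q -> entropic_obj eta C P <= entropic_obj eta C Q.
  move=> Q hQ hQb; rewrite objP Pobj // lerDl; apply: mulr_ge0; first by rewrite invr_ge0 ltW.
  by apply: sum2_ge0 => i j; apply: gg_ge0 => //; case: hQ.
have uniqP : forall Q, in_simplex Q -> balanced Q ->
    (forall Q', in_simplex Q' -> balanced Q' ->
      entropic_obj eta C Q <= entropic_obj eta C Q') -> Q = P.
  move=> Q hQ hQb hmin; have := hmin P (conj P0 P1) Pbal.
  rewrite objP Pobj // -[X in _ <= X]addr0 lerD2l => h.
  apply: sum_gg_zero => //; first by case: hQ.
  by rewrite pmulr_rle0 ?invr_gt0 in h.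
exists P; split; first by split; [split|split].
split.
  exists (diag_mx (\row_i d i)).
  have pd : pos_diag (diag_mx (\row_i d i)).
    by split; [exact: diag_mx_is_diag | move=> i; rewrite !mxE eqxx mulr1n].
  split => //; rewrite diag_conj //.
  suff -> : \matrix_(i, j) (diag_mx (\row_i d i) i i * K i j / diag_mx (\row_i d i) j j)
           = \matrix_(i, j) (d i * K i j / d j) by [].
  by apply/matrixP => i j; rewrite !mxE !eqxx !mulr1n.
move=> X hX; rewrite diag_conj // => hbX.
have dXpos : forall i, 0 < X i i by case: hX.
have [Qpos [Q0 Q1] Qbal Qobj] := gibbs_key hn heta dXpos hbX.
symmetry; apply: uniqP; [split; [move=> i j; apply: Q0 | apply: Q1] | apply: Qbal | ].
move=> Q' hQ' hQ'b.
have PS : in_simplex ((total_sum (\matrix_(i0, j0) (X i0 i0 * K i0 j0 / X j0 j0)))^-1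
  *: \matrix_(i0, j0) (X i0 i0 * K i0 j0 / X j0 j0)).
  by split; [move=> i j; apply: Q0 | apply: Q1].
rewrite (Qobj Q' hQ' hQ'b) (Qobj _ PS Qbal).
have -> : \sum_i \sum_j gg (((total_sum (\matrix_(i0, j0) (X i0 i0 * K i0 j0 / X j0 j0)))^-1
  *: \matrix_(i0, j0) (X i0 i0 * K i0 j0 / X j0 j0)) i j)
  (((total_sum (\matrix_(i0, j0) (X i0 i0 * K i0 j0 / X j0 j0)))^-1
  *: \matrix_(i0, j0) (X i0 i0 * K i0 j0 / X j0 j0)) i j) = 0.
  by rewrite big1 // => i _; rewrite big1 // => j _; exact: gg_eq.
rewrite mulr0 addr0 lerDl; apply: mulr_ge0; first by rewrite invr_ge0 ltW.
by apply: sum2_ge0 => i j; apply: gg_ge0 => //; case: hQ'.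
Qed.
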